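(* If $r\ge 10$ is an integer, then $\rho_2(K(3r-3,r))=3$.
   Context: For integers $n\ge 2r$, the Kneser graph $K(n,r)$ has as vertices the $r$-element subsets of $[n]=\{1,\dots,n\}$, two vertices being adjacent iff they are disjoint. A $2$-packing of a graph $G$ is a set of vertices that are pairwise at distance at least $3$ in $G$ (equivalently, no two are adjacent and no two have a common neighbor); $\rho_2(G)$ is the maximum cardinality of a $2$-packing. *)

(* Defs.v *)
From mathcomp Require Import all_boot.
Set Implicit Arguments. Unset Strict Implicit. Unset Printing Implicit Defensive.

(* Kneser graph K(n,r): vertices are the r-element subsets of 'I_n
   (i.e. of {0,...,n-1}, in bijection with [n]); two vertices are
   adjacent iff they are disjoint. *)
Definition kneser_vertex (n r : nat) (A : {set 'I_n}) : bool := #|A| == r.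

Definition kneser_adj (n r : nat) (A B : {set 'I_n}) : bool :=
  [&& kneser_vertex r A, kneser_vertex r B & [disjoint A & B]].

(* A 2-packing of K(n,r): a set of vertices, pairwise at distance >= 3,
   i.e. no two distinct members adjacent, and no two distinct members
   with a common neighbour. *)
Definition kneser_2packing (n r : nat) (P : {set {set 'I_n}}) : Prop :=
  (forall A, A \in P -> kneser_vertex r A) /\
  (forall A B, A \in P -> B \in P -> A != B ->
     ~~ kneser_adj r A B /\
     (forall C : {set 'I_n}, ~~ (kneser_adj r A C && kneser_adj r C B))).

Definition kneser_rho2_eq (n r k : nat) : Prop :=
  (exists P : {set {set 'I_n}}, kneser_2packing r P /\ #|P| = k) /\
  (forall P, kneser_2packing (n:=n) r P -> #|P| <= k).

(* Main.v *)
Require Import Defs.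
From mathcomp Require Import all_boot.
From mathcomp Require Import zify.
Set Implicit Arguments. Unset Strict Implicit.

Lemma card_pred_ord n (P : pred nat) : #|[set i : 'I_n | P i]| = count P (iota 0 n).
Proof.
rewrite cardsE cardE /enum_mem size_filter -enumT -val_enum_ord count_map.
by apply: eq_count => i.
Qed.
Lemma count_interval a b n : a <= b <= n -> count (fun i => a <= i < b) (iota 0 n) = b - a.
Proof.
move=> /andP[ab bn].
have -> : n = a + ((b - a) + (n - b)) by lia.
rewrite iotaD iotaD !count_cat.
have H1 : forall i : nat, 0 <= i < 0 + a -> (a <= i < b) = pred0 i by move=> i /=; lia.
have H2 : forall i : nat, 0 + a <= i < 0 + a + (b - a) -> (a <= i < b) = predT i by move=> i /=; lia.
have H3 : forall i : nat, 0 + a + (b - a) <= i < 0 + a + (b - a) + (n - b) -> (a <= i < b) = pred0 i by move=> i /=; lia.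
rewrite (eq_in_count (a2 := pred0) (s := iota 0 a)); last by move=> i; rewrite mem_iota; apply: H1.
rewrite (eq_in_count (a2 := predT) (s := iota (0 + a) _)); last by move=> i; rewrite mem_iota; apply: H2.
rewrite (eq_in_count (a2 := pred0) (s := iota (0 + a + (b - a)) _)); last by move=> i; rewrite mem_iota; apply: H3.
by rewrite !count_pred0 count_predT size_iota add0n addn0.
Qed.
Lemma sub_of_size {T : finType} (A : {set T}) k : k <= #|A| -> exists B : {set T}, B \subset A /\ #|B| = k.
Proof.
move/card_geqP=> [s [us ss sA]].
exists [set x in s]; split; first by apply/subsetP=> x; rewrite inE; apply: sA.
by rewrite cardsE (card_uniqP us).
Qed.

Lemma card_interval n a b : a <= b <= n -> #|[set i : 'I_n | a <= i < b]| = b - a.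
Proof. by move=> H; rewrite (card_pred_ord n (fun i => a <= i < b)) count_interval. Qed.

Lemma bonf4 (T : finType) (a b c d : {set T}) :
  #|a| + #|b| + #|c| + #|d| <= #|a :|: b :|: c :|: d| + (#|a :&: b| + #|a :&: c| + #|b :&: c|
     + #|a :&: d| + #|b :&: d| + #|c :&: d|).
Proof.
have e1 := cardsUI a b. have e2 := cardsUI (a :|: b) c. have e3 := cardsUI (a :|: b :|: c) d.
have s2 : #|(a :|: b) :&: c| <= #|a :&: c| + #|b :&: c|.
  by rewrite setIUl; apply: leq_of_leqif (leq_card_setU _ _).
have s3 : #|(a :|: b :|: c) :&: d| <= #|a :&: d| + #|b :&: d| + #|c :&: d|.
  rewrite !setIUl; apply: leq_trans (leq_of_leqif (leq_card_setU _ _)) _.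
  by rewrite leq_add2r; apply: leq_of_leqif (leq_card_setU _ _).
lia.
Qed.

Lemma no_nb_bound n r (A B : {set 'I_n}) : #|A| = r -> #|B| = r ->
  (forall C : {set 'I_n}, ~~ (kneser_adj r A C && kneser_adj r C B)) -> n < #|A :|: B| + r.
Proof.
move=> cA cB H; rewrite ltnNge; apply/negP => Hle.
have Hc : r <= #|~: (A :|: B)| by have := cardsC (A :|: B); rewrite card_ord; lia.
have [C [sC cC]] := sub_of_size Hc.
move: (H C) => /negP; apply.
rewrite /kneser_adj /kneser_vertex cA cB cC eqxx /= (disjoint_sym A C) !disjoints_subset.
by rewrite setCU subsetI in sC.
Qed.

Lemma pair_bound n r (P : {set {set 'I_n}}) (X Y : {set 'I_n}) :
  n = 3 * r - 3 -> 10 <= r -> kneser_2packing r P -> X \in P -> Y \in P -> X != Y ->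
  #|X :&: Y| <= 2.
Proof.
move=> En Hr [HV HP] XP YP XY.
have /eqP cX := HV X XP. have /eqP cY := HV Y YP.
have [_ H] := HP X Y XP YP XY.
have := no_nb_bound cX cY H. have := cardsUI X Y. lia.
Qed.

Lemma upper n r (P : {set {set 'I_n}}) : n = 3 * r - 3 -> 10 <= r -> kneser_2packing r P -> #|P| <= 3.
Proof.
move=> En Hr HP; rewrite leqNgt; apply/negP => /card_geqP [s [us ss sP]].
case: s us ss sP => [|a [|b [|c [|d [|? ?]]]]] //= us _ sP.
have aP : a \in P by apply: sP; rewrite !inE eqxx.
have bP : b \in P by apply: sP; rewrite !inE eqxx ?orbT.
have cP : c \in P by apply: sP; rewrite !inE eqxx ?orbT.
have dP : d \in P by apply: sP; rewrite !inE eqxx ?orbT.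
move: us; rewrite !inE !negb_or => /and4P [/and3P [ab ac ad] /andP [bc bd] cd _].
have /eqP ca := (proj1 HP) a aP. have /eqP cb := (proj1 HP) b bP.
have /eqP cc := (proj1 HP) c cP. have /eqP cd' := (proj1 HP) d dP.
have := pair_bound En Hr HP aP bP ab. have := pair_bound En Hr HP aP cP ac.
have := pair_bound En Hr HP aP dP ad. have := pair_bound En Hr HP bP cP bc.
have := pair_bound En Hr HP bP dP bd. have := pair_bound En Hr HP cP dP cd.
have := bonf4 a b c d.
have := subset_leq_card (subsetT (a :|: b :|: c :|: d)). rewrite cardsT card_ord.
lia.
Qed.

Lemma good n r (X Y : {set 'I_n}) (x : 'I_n) : n = 3 * r - 3 -> 10 <= r ->
  #|X| = r -> #|Y| = r -> x \in X -> x \in Y -> X :&: Y \subset [set x] ->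
  ~~ kneser_adj r X Y /\ (forall C : {set 'I_n}, ~~ (kneser_adj r X C && kneser_adj r C Y)).
Proof.
move=> En Hr cX cY xX xY sXY; split.
  apply/negP => /and3P [_ _ D]; move: D; rewrite -setI_eq0 => /eqP E.
  by have := in_set0 x; rewrite -E inE xX xY.
move=> C; apply/negP => /andP [/and3P [_ /eqP cC dXC] /and3P [_ _ dCY]].
rewrite disjoint_sym disjoints_subset in dXC; rewrite disjoints_subset in dCY.
have sC : C \subset ~: (X :|: Y) by rewrite setCU subsetI dXC dCY.
have := subset_leq_card sC. have := cardsC (X :|: Y). rewrite card_ord.
have := cardsUI X Y. have := subset_leq_card sXY. rewrite cards1. lia.
Qed.

Lemma construct n r : n = 3 * r - 3 -> 10 <= r ->
  exists P : {set {set 'I_n}}, kneser_2packing r P /\ #|P| = 3.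
Proof.
move=> En Hr.
have h0 : 0 < n by lia. have h1 : r - 1 < n by lia. have h2 : 2 * r - 2 < n by lia.
pose x0 := Ordinal h0; pose x1 := Ordinal h1; pose x2 := Ordinal h2.
pose A := [set i : 'I_n | 0 <= i < r].
pose B := [set i : 'I_n | r - 1 <= i < 2 * r - 1].
pose C := [set i : 'I_n | 2 * r - 2 <= i < n] :|: [set i : 'I_n | 0 <= i < 1].
have cA : #|A| = r by rewrite card_interval; lia.
have cB : #|B| = r by rewrite card_interval; lia.
have cC : #|C| = r.
  rewrite cardsU card_interval; last by lia.
  rewrite card_interval; last by lia.
  have -> : [set i : 'I_n | 2 * r - 2 <= i < n] :&: [set i : 'I_n | 0 <= i < 1] = set0.
    by apply/setP => i; rewrite !inE; lia.
  rewrite cards0; lia.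
have gAB : ~~ kneser_adj r A B /\ (forall D : {set 'I_n}, ~~ (kneser_adj r A D && kneser_adj r D B)).
  apply: (good (x := x1)) => //; rewrite ?inE /=; try lia.
  by apply/subsetP => i; rewrite !inE => H; apply/eqP/val_inj => /=; lia.
have gBA : ~~ kneser_adj r B A /\ (forall D : {set 'I_n}, ~~ (kneser_adj r B D && kneser_adj r D A)).
  apply: (good (x := x1)) => //; rewrite ?inE /=; try lia.
  by apply/subsetP => i; rewrite !inE => H; apply/eqP/val_inj => /=; lia.
have gAC : ~~ kneser_adj r A C /\ (forall D : {set 'I_n}, ~~ (kneser_adj r A D && kneser_adj r D C)).
  apply: (good (x := x0)) => //; rewrite ?inE /=; try lia.
  by apply/subsetP => i; rewrite !inE => H; apply/eqP/val_inj => /=; lia.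
have gCA : ~~ kneser_adj r C A /\ (forall D : {set 'I_n}, ~~ (kneser_adj r C D && kneser_adj r D A)).
  apply: (good (x := x0)) => //; rewrite ?inE /=; try lia.
  by apply/subsetP => i; rewrite !inE => H; apply/eqP/val_inj => /=; lia.
have gBC : ~~ kneser_adj r B C /\ (forall D : {set 'I_n}, ~~ (kneser_adj r B D && kneser_adj r D C)).
  apply: (good (x := x2)) => //; rewrite ?inE /=; try lia.
  by apply/subsetP => i; rewrite !inE => H; apply/eqP/val_inj => /=; lia.
have gCB : ~~ kneser_adj r C B /\ (forall D : {set 'I_n}, ~~ (kneser_adj r C D && kneser_adj r D B)).
  apply: (good (x := x2)) => //; rewrite ?inE /=; try lia.
  by apply/subsetP => i; rewrite !inE => H; apply/eqP/val_inj => /=; lia.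
have AB : A != B.
  apply/eqP => E; have : x0 \in B by rewrite -E inE /=; lia.
  by rewrite inE /=; lia.
have AC : A != C.
  apply/eqP => E; have : x2 \in A by rewrite E !inE /=; lia.
  by rewrite inE /=; lia.
have BC : B != C.
  apply/eqP => E; have : x0 \in B by rewrite E !inE /=; lia.
  by rewrite inE /=; lia.
exists [set A; B; C]; split; last first.
  by rewrite -setUA !cardsU1 cards1 !inE negb_or AB AC BC.
split.
  by move=> X; rewrite !inE => /orP [/orP [] | ] /eqP ->; rewrite /kneser_vertex ?cA ?cB ?cC.
move=> X Y; rewrite !inE => /orP [/orP [] | ] /eqP -> /orP [/orP [] | ] /eqP ->; rewrite ?eqxx // => _; by [].
Qed.

Theorem proposition4p2 (r : nat) : 10 <= r -> kneser_rho2_eq (3 * r - 3) r 3.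
Proof.
move=> Hr; split; first exact: construct.
by move=> P HP; apply: (upper _ Hr HP).
Qed.
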